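(* In the setting below, for an integer $t \geq 1$, if $\eta \geq \eta_0$ and $|\tilde{w}_t| \leq \frac{1}{2}\gamma\hat{w}_t$, then $F(w_t) \leq 1/(8\eta)$.
   Context: Dimension $d=2$. Data $x_1,\dots,x_n\in\mathbb{R}^2$ with $\|x_i\|\le 1$, linearly separable (some $w$ has $\langle w,x_i\rangle>0$ for all $i$). $F(w) = \frac{1}{n}\sum_{i=1}^n \log(1+\exp(-\langle w, x_i\rangle))$. Maximum margin $\gamma = \max_{\|w\|=1}\min_i \langle w, x_i\rangle$ with maximizer the unit vector $w_*$; $v_*$ is a fixed unit vector orthogonal to $w_*$. Gradient descent: $w_0=0$, $w_{t+1} = w_t - \eta\nabla F(w_t)$ with constant $\eta>0$. $\hat{w}_t = \langle w_t, w_*\rangle$, $\tilde{w}_t = \langle w_t, v_*\rangle$. $\eta_0 = \max(n, \frac{32}{\gamma^2}\log\frac{256}{\gamma^2})$. *)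

(* Defs.v *)
From Stdlib Require Import Reals Lra Lia.
Open Scope R_scope.

Definition vec := (R * R)%type.
Definition dot (u v : vec) : R := fst u * fst v + snd u * snd v.
Definition vnorm (u : vec) : R := sqrt (dot u u).
Definition vadd (u v : vec) : vec := (fst u + fst v, snd u + snd v).
Definition vscale (a : R) (u : vec) : vec := (a * fst u, a * snd u).

Fixpoint sumR (f : nat -> R) (k : nat) : R :=
  match k with O => 0 | S k' => sumR f k' + f k' end.
Fixpoint vsum (f : nat -> vec) (k : nat) : vec :=
  match k with O => (0, 0) | S k' => vadd (vsum f k') (f k') end.

Fixpoint minR (f : nat -> R) (k : nat) : R :=
  match k with O => f O | S k' => Rmin (minR f k') (f k) end.

(* margin of w on data x_0..x_{n-1}: min_i <w, x_i>  (n >= 1) *)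
Definition margin (n : nat) (x : nat -> vec) (w : vec) : R :=
  minR (fun i => dot w (x i)) (n - 1).

Definition F (n : nat) (x : nat -> vec) (w : vec) : R :=
  / INR n * sumR (fun i => ln (1 + exp (- dot w (x i)))) n.

Definition gradF (n : nat) (x : nat -> vec) (w : vec) : vec :=
  vscale (- / INR n) (vsum (fun i => vscale (/ (1 + exp (dot w (x i)))) (x i)) n).

Fixpoint gd (n : nat) (x : nat -> vec) (eta : R) (t : nat) : vec :=
  match t with
  | O => (0, 0)
  | S t' => let w := gd n x eta t' in vadd w (vscale (- eta) (gradF n x w))
  end.

Definition eta0 (n : nat) (gamma : R) : R :=
  Rmax (INR n) (32 / gamma ^ 2 * ln (256 / gamma ^ 2)).

(* Main.v *)
Require Import Defs.
From Stdlib Require Import Reals Lra Lia Psatz.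
Open Scope R_scope.

Lemma minR_le f k i : (i <= k)%nat -> minR f k <= f i.
Proof.
  induction k as [|k IH]; intros Hi; simpl.
  - assert (i = 0%nat) by lia; subst; lra.
  - destruct (Nat.eq_dec i (S k)) as [->|Hne].
    + apply Rmin_r.
    + eapply Rle_trans; [apply Rmin_l|]. apply IH; lia.
Qed.

Lemma minR_pos f k : (forall i, (i <= k)%nat -> 0 < f i) -> 0 < minR f k.
Proof.
  induction k as [|k IH]; intros H; simpl.
  - apply H; lia.
  - apply Rmin_glb_lt; [apply IH; intros; apply H; lia | apply H; lia].
Qed.

Lemma sumR_le f g k : (forall i, (i < k)%nat -> f i <= g i) -> sumR f k <= sumR g k.
Proof.
  induction k as [|k IH]; intros H; simpl; [lra|].
  assert (f k <= g k) by (apply H; lia).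
  assert (sumR f k <= sumR g k) by (apply IH; intros; apply H; lia). lra.
Qed.

Lemma sumR_const c k : sumR (fun _ => c) k = INR k * c.
Proof.
  induction k as [|k IH]; [simpl; lra|]. change (sumR (fun _ => c) k + c = INR (S k) * c). rewrite IH, S_INR. ring.
Qed.

Lemma dot_vsum f k u : dot (vsum f k) u = sumR (fun i => dot (f i) u) k.
Proof.
  induction k as [|k IH]; simpl.
  - unfold dot; simpl; ring.
  - rewrite <- IH. unfold dot, vadd; simpl. ring.
Qed.

Lemma sumR_ext f g k : (forall i, f i = g i) -> sumR f k = sumR g k.
Proof. intros H; induction k; simpl; [reflexivity|]. rewrite IHk, H. reflexivity. Qed.

Lemma hat_step n x eta t u :
  dot (gd n x eta (S t)) u = dot (gd n x eta t) u +
    eta * / INR n * sumR (fun i => / (1 + exp (dot (gd n x eta t) (x i))) * dot (x i) u) n.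
Proof.
  simpl. set (w := gd n x eta t).
  unfold gradF.
  assert (HS : sumR (fun i => / (1 + exp (dot w (x i))) * dot (x i) u) n =
     dot (vsum (fun i => vscale (/ (1 + exp (dot w (x i)))) (x i)) n) u).
  { rewrite dot_vsum. apply sumR_ext. intros i. unfold dot, vscale; simpl; ring. }
  rewrite HS.
  set (Sv := vsum _ n). unfold dot, vadd, vscale; simpl. ring.
Qed.

Lemma vnorm1 u : vnorm u = 1 -> dot u u = 1.
Proof.
  unfold vnorm; intros H.
  assert (0 <= dot u u) by (unfold dot; nra).
  rewrite <- (sqrt_sqrt (dot u u)) by lra. rewrite H; ring.
Qed.

Lemma vnorm_le1 u : vnorm u <= 1 -> dot u u <= 1.
Proof.
  unfold vnorm; intros H.
  assert (0 <= dot u u) by (unfold dot; nra).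
  rewrite <- (sqrt_sqrt (dot u u)) by lra.
  assert (0 <= sqrt (dot u u)) by apply sqrt_pos. nra.
Qed.

Lemma cs1 u v : dot u u = 1 -> dot v v <= 1 -> Rabs (dot u v) <= 1.
Proof.
  destruct u as [a b], v as [p q]; unfold dot; simpl; intros H1 H2.
  assert (Hid : (a*p+b*q)^2 + (a*q-b*p)^2 = (a*a+b*b)*(p*p+q*q)) by ring.
  rewrite H1 in Hid.
  assert (0 <= (a*q-b*p)^2) by (apply pow2_ge_0).
  assert ((a*p+b*q)^2 <= 1) by lra.
  apply Rabs_le; split; nra.
Qed.

Lemma decomp w u v y : dot u u = 1 -> dot v v = 1 -> dot u v = 0 ->
  dot w y = dot w u * dot u y + dot w v * dot v y.
Proof.
  destruct w as [w1 w2], u as [a b], v as [c d], y as [p q]; unfold dot; simpl.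
  intros H1 H2 H3.
  assert (Hc : c*c = b*b).
  { assert (E1 : a*a*(c*c) = b*b*(d*d)).
    { replace (a*a*(c*c)) with ((a*c)*(a*c)) by ring.
      replace (a*c) with (-(b*d)) by lra. ring. }
    replace (a*a) with (1 - b*b) in E1 by lra.
    replace (d*d) with (1 - c*c) in E1 by lra. lra. }
  assert (Hd : d*d = a*a) by lra.
  assert (He : a*(a*b+c*d) = 0).
  { replace (a*(a*b+c*d)) with (b*(a*a) + d*(a*c)) by ring.
    replace (a*c) with (-(b*d)) by lra. replace (b*(a*a) + d*(-(b*d))) with (b*(a*a - d*d)) by ring.
    rewrite Hd; ring. }
  assert (Hf : b*(a*b+c*d) = 0).
  { replace (b*(a*b+c*d)) with (a*(b*b) + c*(b*d)) by ring.
    replace (b*d) with (-(a*c)) by lra. replace (a*(b*b) + c*(-(a*c))) with (a*(b*b - c*c)) by ring.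
    rewrite Hc; ring. }
  assert (Hg : a*b+c*d = 0).
  { replace (a*b+c*d) with ((a*a+b*b)*(a*b+c*d)) by (rewrite H1; ring).
    replace ((a*a+b*b)*(a*b+c*d)) with (a*(a*(a*b+c*d)) + b*(b*(a*b+c*d))) by ring.
    rewrite He, Hf. ring. }
  replace ((w1 * a + w2 * b) * (a * p + b * q) + (w1 * c + w2 * d) * (c * p + d * q))
    with (w1*p*(a*a+c*c) + w2*q*(b*b+d*d) + (w1*q+w2*p)*(a*b+c*d)) by ring.
  rewrite Hg. replace (a*a+c*c) with 1 by lra. replace (b*b+d*d) with 1 by lra. ring.
Qed.

Lemma ln_le' x y : 0 < x -> x <= y -> ln x <= ln y.
Proof. intros H [H'|H']; [left; apply ln_increasing; auto| subst; right; reflexivity]. Qed.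

Lemma exp_le' x y : x <= y -> exp x <= exp y.
Proof. intros [H|H]; [left; apply exp_increasing; auto| subst; right; reflexivity]. Qed.

Lemma dot_comm u v : dot u v = dot v u.
Proof. unfold dot; ring. Qed.

Theorem lemma13 (n : nat) (x : nat -> vec) (wstar vstar : vec) (gamma eta : R) (t : nat) :
  (1 <= n)%nat ->
  (forall i, (i < n)%nat -> vnorm (x i) <= 1) ->
  (exists w, forall i, (i < n)%nat -> 0 < dot w (x i)) ->
  vnorm wstar = 1 ->
  (forall w, vnorm w = 1 -> margin n x w <= margin n x wstar) ->
  gamma = margin n x wstar ->
  vnorm vstar = 1 ->
  dot wstar vstar = 0 ->
  0 < eta ->
  (1 <= t)%nat ->
  eta0 n gamma <= eta ->
  Rabs (dot (gd n x eta t) vstar) <= 1 / 2 * gamma * dot (gd n x eta t) wstar ->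
  F n x (gd n x eta t) <= 1 / (8 * eta).
Proof.
  intros Hn Hx [w0 Hw0] Hws Hmax Hg Hvs Horth Heta Ht Heta0 Hcone.
  assert (Hws1 := vnorm1 _ Hws). assert (Hvs1 := vnorm1 _ Hvs).
  assert (HnR : 0 < INR n) by (apply lt_0_INR; lia).
  assert (Hmarg : forall i, (i < n)%nat -> gamma <= dot (x i) wstar).
  { intros i Hi. rewrite Hg, dot_comm. unfold margin.
    apply (minR_le (fun i => dot wstar (x i))). lia. }
  assert (Hgpos : 0 < gamma).
  { assert (Hdd : 0 < dot w0 w0).
    { destruct (Rle_or_lt (dot w0 w0) 0) as [Hle|]; [|assumption].
      exfalso. assert (H0 := Hw0 0%nat ltac:(lia)).
      destruct w0 as [w1 w2]. unfold dot in *; simpl in *.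
      assert (w1 = 0) by nra. assert (w2 = 0) by nra. subst. lra. }
    set (s := vnorm w0).
    assert (Hs : 0 < s) by (apply sqrt_lt_R0; exact Hdd).
    assert (Hs2 : s * s = dot w0 w0) by (apply sqrt_sqrt; lra).
    set (u := vscale (/ s) w0).
    assert (Hu : vnorm u = 1).
    { unfold vnorm. replace (dot u u) with 1. apply sqrt_1.
      unfold u, dot, vscale in *; simpl in *.
      replace ((/ s * fst w0 * (/ s * fst w0) + / s * snd w0 * (/ s * snd w0)))
        with ((fst w0 * fst w0 + snd w0 * snd w0) / (s*s)) by (field; lra).
      rewrite Hs2. field. lra. }
    rewrite Hg. eapply Rlt_le_trans; [|apply Hmax, Hu].
    unfold margin. apply minR_pos. intros i Hi.
    assert (H := Hw0 i ltac:(lia)).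
    replace (dot u (x i)) with (/ s * dot w0 (x i)) by (unfold u, dot, vscale; simpl; ring).
    apply Rmult_lt_0_compat; [apply Rinv_0_lt_compat|]; lra. }
  assert (Hhat1 : eta * gamma / 2 <= dot (gd n x eta 1) wstar).
  { rewrite hat_step. simpl gd.
    assert (Hsum : INR n * (gamma / 2) <= sumR (fun i => / (1 + exp (dot (0,0) (x i))) * dot (x i) wstar) n).
    { rewrite <- sumR_const. apply sumR_le. intros i Hi.
      replace (dot (0,0) (x i)) with 0 by (unfold dot; simpl; ring).
      rewrite exp_0. assert (H := Hmarg i Hi). lra. }
    replace (dot (0,0) wstar) with 0 by (unfold dot; simpl; ring).
    apply Rle_trans with (eta * / INR n * (INR n * (gamma / 2))).
    - right. field. lra.
    - assert (0 < eta * / INR n) by (apply Rmult_lt_0_compat; [lra|apply Rinv_0_lt_compat; lra]).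
      nra. }
  assert (Hmono : forall k, dot (gd n x eta k) wstar <= dot (gd n x eta (S k)) wstar).
  { intros k. rewrite hat_step.
    assert (0 <= sumR (fun i => / (1 + exp (dot (gd n x eta k) (x i))) * dot (x i) wstar) n).
    { rewrite <- (Rmult_0_r (INR n)), <- sumR_const. apply sumR_le. intros i Hi.
      assert (H := Hmarg i Hi).
      assert (0 < / (1 + exp (dot (gd n x eta k) (x i)))).
      { apply Rinv_0_lt_compat. assert (0 < exp (dot (gd n x eta k) (x i))) by apply exp_pos. lra. }
      nra. }
    assert (0 < eta * / INR n) by (apply Rmult_lt_0_compat; [lra|apply Rinv_0_lt_compat; lra]).
    nra. }
  assert (Hhat : eta * gamma / 2 <= dot (gd n x eta t) wstar).
  { destruct t as [|t]; [lia|]. clear Hcone Ht.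
    induction t as [|t IH]; [exact Hhat1|].
    eapply Rle_trans; [exact IH|apply Hmono]. }
  set (w := gd n x eta t) in *.
  set (h := dot w wstar) in *.
  set (a := gamma * gamma * eta / 4).
  assert (Ha : 0 < a) by (unfold a; apply Rdiv_lt_0_compat; [apply Rmult_lt_0_compat; [apply Rmult_lt_0_compat|]|]; lra).
  assert (Hz : forall i, (i < n)%nat -> a <= dot w (x i)).
  { intros i Hi.
    rewrite (decomp w wstar vstar (x i) Hws1 Hvs1 Horth). fold h.
    assert (Hs := Hmarg i Hi). rewrite dot_comm in Hs.
    assert (Hr : Rabs (dot vstar (x i)) <= 1) by (apply cs1; [exact Hvs1| apply vnorm_le1, Hx, Hi]).
    assert (Hp : dot w vstar * dot vstar (x i) >= - Rabs (dot w vstar)).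
    { assert (Rabs (dot w vstar * dot vstar (x i)) <= Rabs (dot w vstar)).
      { rewrite Rabs_mult. assert (0 <= Rabs (dot w vstar)) by apply Rabs_pos.
        assert (0 <= Rabs (dot vstar (x i))) by apply Rabs_pos. nra. }
      apply Rle_ge. assert (H' := Rle_abs (- (dot w vstar * dot vstar (x i)))).
      rewrite Rabs_Ropp in H'. lra. }
    assert (0 <= h) by nra.
    assert (h * dot wstar (x i) >= h * gamma) by nra.
    unfold a. nra. }
  assert (HF : F n x w <= exp (- a)).
  { unfold F.
    assert (sumR (fun i => ln (1 + exp (- dot w (x i)))) n <= sumR (fun _ => exp (-a)) n).
    { apply sumR_le. intros i Hi.
      assert (H1 : ln (1 + exp (- dot w (x i))) <= exp (- dot w (x i))).
      { rewrite <- (ln_exp (exp (- dot w (x i)))) at 2.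
        apply ln_le'. assert (0 < exp (- dot w (x i))) by apply exp_pos. lra.
        apply exp_ineq1_le. }
      assert (exp (- dot w (x i)) <= exp (-a)).
      { apply exp_le'. assert (H := Hz i Hi). lra. }
      lra. }
    rewrite sumR_const in H.
    apply Rle_trans with (/ INR n * (INR n * exp (-a))).
    - apply Rmult_le_compat_l; [left; apply Rinv_0_lt_compat; lra| exact H].
    - right. field. lra. }
  assert (Heta1 : 32 / gamma ^ 2 * ln (256 / gamma ^ 2) <= eta).
  { eapply Rle_trans; [apply Rmax_r|exact Heta0]. }
  set (L := ln (256 / gamma ^ 2)) in *.
  assert (Hg2 : 0 < gamma ^ 2) by (apply pow_lt; lra).
  assert (HL : L <= a / 8).
  { unfold a. replace (gamma * gamma * eta / 4 / 8) with (gamma^2 / 32 * eta) by (simpl; field).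
    apply Rle_trans with (gamma^2/32 * (32 / gamma ^ 2 * L)).
    - right. field. lra.
    - apply Rmult_le_compat_l; [lra|exact Heta1]. }
  assert (HeL : 256 / gamma ^ 2 <= exp (a/8)).
  { unfold L in HL. rewrite <- (exp_ln (256 / gamma ^ 2)).
    - apply exp_le'. exact HL.
    - apply Rdiv_lt_0_compat; lra. }
  assert (He1 : a / 8 <= exp (a/8)).
  { assert (H := exp_ineq1_le (a/8)). lra. }
  assert (Hea : exp (a/8) * exp (a/8) <= exp a).
  { rewrite <- exp_plus. apply exp_le'. lra. }
  assert (H8 : 8 * eta <= exp a).
  { assert (8 * eta = 256 / gamma ^ 2 * (a / 8)) by (unfold a; simpl; field; lra).
    assert (0 < 256 / gamma^2) by (apply Rdiv_lt_0_compat; lra).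
    nra. }
  eapply Rle_trans; [exact HF|].
  rewrite exp_Ropp. unfold Rdiv. rewrite Rmult_1_l.
  apply Rinv_le_contravar; lra.
Qed.
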